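(* In the linear mixture MDP setting with Algorithm 1 as described in the context, on the event $\mathcal{E}_1$ defined in the context, $$\tilde V_1^*(s_1,R_K)\le 6H^2d\sqrt{\frac{\log(4H^3KB^2/\delta)\log(1+KH^2B^2/d)}{K}},$$ where $R_K=\{R_{K,h}\}_h$ is the exploration-driven reward of the final episode $K$.
   Context: Episodic MDP with state set $\mathcal{S}$, action set $\mathcal{A}$, horizon $H$, transitions $P_h(\cdot|s,a)$, fixed initial state $s_1$. For a nonnegative reward $R=\{R_h\}$ define $\tilde V^*_{H+1}(\cdot,R)=0$ and $\tilde V^*_h(s,R)=\max_{a}\min\{R_h(s,a)+\sum_{s'}P_h(s'|s,a)\tilde V^*_{h+1}(s',R),H\}$. Linear mixture MDP: known $\phi:\mathcal{S}\times\mathcal{A}\times\mathcal{S}\to\mathbb{R}^d$ with $\|\sum_{s'}\phi(s,a,s')V(s')\|_2\le1$ for all $V:\mathcal{S}\to[0,1]$, and unknown $\theta_h$, $\|\theta_h\|_2\le B$, with $P_h(s'|s,a)=\theta_h^\top\phi(s,a,s')$. $\|x\|_M=\sqrt{x^\top Mx}$. Algorithm 1 (run for $K$ episodes, failure probability $\delta$): $\lambda=B^{-2}$, $\beta=H\sqrt{d\log(4H^3K\lambda^{-1}\delta^{-1})}+\sqrt\lambda B$, $\mathcal{V}=\{V:\mathcal{S}\to[0,H]\}$. For $k=1,\dots,K$: $V_{k,H+1}\equiv0$; for $h=H,\dots,1$: $\Lambda_{k,h}=\sum_{t<k}\phi_{t,h}(s_{t,h},a_{t,h})\phi_{t,h}(s_{t,h},a_{t,h})^\top+\lambda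 I$; $\hat\theta_{k,h}=\Lambda_{k,h}^{-1}\sum_{t<k}\phi_{t,h}(s_{t,h},a_{t,h})\tilde V_{t,h+1,s_{t,h},a_{t,h}}(s_{t,h+1})$; $\tilde V_{k,h+1,s,a}\in\arg\max_{V\in\mathcal{V}}\|\sum_{s'}\phi(s,a,s')V(s')\|_{\Lambda_{k,h}^{-1}}$; $\phi_{k,h}(s,a)=\sum_{s'}\phi(s,a,s')\tilde V_{k,h+1,s,a}(s')$; $u_{k,h}(s,a)=\beta\|\phi_{k,h}(s,a)\|_{\Lambda_{k,h}^{-1}}$; $R_{k,h}=u_{k,h}$; $Q_{k,h}(s,a)=\min\{\hat\theta_{k,h}^\top\sum_{s'}\phi(s,a,s')V_{k,h+1}(s')+R_{k,h}(s,a)+u_{k,h}(s,a),H\}$; $V_{k,h}(s)=\max_aQ_{k,h}(s,a)$, $\pi_{k,h}(s)\in\arg\max_aQ_{k,h}(s,a)$. Then $\pi_k$ is executed from $s_1$, producing $s_{k,h+1}\sim P_h(\cdot|s_{k,h},a_{k,h})$, $a_{k,h}=\pi_{k,h}(s_{k,h})$. $\mathcal{E}_1$ is the event on which both (i) $\|\hat\theta_{k,h}-\theta_h\|_{\Lambda_{k,h}}\le\beta$ for all $k\in[K],h\in[H]$, and (ii) $\sum_{k=1}^K\sum_{h=1}^H\big(\sum_{s'}P_h(s'|s_{k,h},a_{k,h})V_{k,h+1}(s')-V_{k,h+1}(s_{k,h+1})\big)\le\sqrt{2H^3K\log(4/\delta)}$ hold. *)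

(* Defs.v *)
From HB Require Import structures.
From mathcomp Require Import all_boot all_order all_algebra.
From mathcomp Require Import reals exp.
Set Implicit Arguments. Unset Strict Implicit. Unset Printing Implicit Defensive.
Import Order.TTheory GRing.Theory Num.Theory.
Local Open Scope ring_scope.

(* Conventions: episodes k range over 1..K, steps h over 1..H (as in the paper).
   Vectors of R^d are column vectors 'cV[R]_d. *)

Section Defs.
Variables (R : realType) (S A : finType) (d : nat).

(* ||x||_M = sqrt(x^T M x); ||x||_2 = ||x||_{I} *)
Definition wnorm (M : 'M[R]_d) (x : 'cV[R]_d) : R :=
  Num.sqrt ((x^T *m M *m x) ord0 ord0).

Definition phiV (phi : S -> A -> S -> 'cV[R]_d) (s : S) (a : A) (V : S -> R)
  : 'cV[R]_d := \sum_(s' : S) V s' *: phi s a s'.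

(* max over the (nonempty, a0 : A) action set *)
Definition maxA (a0 : A) (f : A -> R) : R := \big[Num.max/f a0]_(a : A) f a.

(* Backward recursion over steps h = H, H-1, ..., 1 with V_{H+1} = 0:
   bwd H step m is the value at step h = H+1-m. *)
Fixpoint bwd (H : nat) (step : nat -> (S -> R) -> (S -> R)) (m : nat) : S -> R :=
  match m with
  | O => fun _ => 0
  | m'.+1 => step (H - m')%N (bwd H step m')
  end.

Definition bwdV (H : nat) (step : nat -> (S -> R) -> (S -> R)) (h : nat) : S -> R :=
  if (1 <= h <= H)%N then bwd H step (H.+1 - h) else (fun _ => 0).

Definition Vstar (a0 : A) (H : nat) (P : nat -> S -> A -> S -> R)
  (Rw : nat -> S -> A -> R) : nat -> S -> R :=
  bwdV H (fun h Vn s =>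
    maxA a0 (fun a => Num.min (Rw h s a + \sum_(s' : S) P h s a s' * Vn s') H%:R)).

Definition lamB (B : R) : R := B ^- 2.

Definition betaB (H K : nat) (B delta : R) : R :=
  H%:R * Num.sqrt (d%:R * ln (4 * H%:R ^+ 3 * K%:R * (lamB B)^-1 * delta^-1))
  + Num.sqrt (lamB B) * B.

Variables (phi : S -> A -> S -> 'cV[R]_d) (B delta : R) (H K : nat)
  (Vt : nat -> nat -> S -> A -> S -> R) (* Vt k h s a = tilde V_{k,h+1,s,a} *)
  (st : nat -> nat -> S) (act : nat -> nat -> A)
  (a0 : A).

Definition featV (k h : nat) (s : S) (a : A) : 'cV[R]_d := phiV phi s a (Vt k h s a).

Definition Lam (k h : nat) : 'M[R]_d :=
  \sum_(1 <= t < k) (featV t h (st t h) (act t h) *m (featV t h (st t h) (act t h))^T)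
  + (lamB B)%:M.

Definition thetahat (k h : nat) : 'cV[R]_d :=
  invmx (Lam k h) *m
  \sum_(1 <= t < k) (Vt t h (st t h) (act t h) (st t h.+1) *: featV t h (st t h) (act t h)).

(* u_{k,h}(s,a) = beta ||phi_{k,h}(s,a)||_{Lambda_{k,h}^{-1}}; also R_{k,h} = u_{k,h} *)
Definition bonus (k h : nat) (s : S) (a : A) : R :=
  betaB H K B delta * wnorm (invmx (Lam k h)) (featV k h s a).

Definition Qalg (k h : nat) (Vn : S -> R) (s : S) (a : A) : R :=
  Num.min (((thetahat k h)^T *m phiV phi s a Vn) ord0 ord0 + bonus k h s a + bonus k h s a)
          H%:R.

Definition Valg (k : nat) : nat -> S -> R :=
  bwdV H (fun h Vn s => maxA a0 (Qalg k h Vn s)).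

Definition Qk (k h : nat) (s : S) (a : A) : R := Qalg k h (Valg k h.+1) s a.

End Defs.

(* Main.v *)
Require Import Defs.
From HB Require Import structures.
From mathcomp Require Import all_boot all_order all_algebra.
From mathcomp Require Import reals exp.
From mathcomp Require Import sequences.
From mathcomp Require Import ring lra.
Import Order.TTheory GRing.Theory Num.Theory.
Local Open Scope ring_scope.
Set Implicit Arguments. Unset Strict Implicit. Unset Printing Implicit Defensive.


Section LA.
Variable R : realType.

Definition bil n (M : 'M[R]_n) (x y : 'cV[R]_n) : R := (x^T *m M *m y) ord0 ord0.
Definition qf n (M : 'M[R]_n) (x : 'cV[R]_n) : R := bil M x x.
Definition ip n (x y : 'cV[R]_n) : R := (x^T *m y) ord0 ord0.

Lemma ip_sq n (x : 'cV[R]_n) : ip x x = \sum_i x i 0 ^+ 2.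
Proof. by rewrite /ip mxE; apply: eq_bigr => i _; rewrite mxE expr2. Qed.

Lemma ip_ge0 n (x : 'cV[R]_n) : 0 <= ip x x.
Proof. by rewrite ip_sq; apply: sumr_ge0 => i _; apply: sqr_ge0. Qed.

Lemma ip_eq0 n (x : 'cV[R]_n) : ip x x = 0 -> x = 0.
Proof.
rewrite ip_sq => /eqP; rewrite psumr_eq0 => [/allP H|i _]; last exact: sqr_ge0.
apply/matrixP => i j; rewrite (ord1 j) mxE.
by have := H i (mem_index_enum _); rewrite sqrf_eq0 => /eqP.
Qed.

Lemma ipC n (x y : 'cV[R]_n) : ip x y = ip y x.
Proof. by rewrite /ip !mxE; apply: eq_bigr => i _; rewrite !mxE mulrC. Qed.

Lemma bilC n (M : 'M[R]_n) x y : M^T = M -> bil M x y = bil M y x.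
Proof.
move=> sM; rewrite /bil.
rewrite -[in LHS](trmxK (x^T *m M *m y)) [in LHS]mxE.
rewrite !trmx_mul trmxK sM mulmxA.
reflexivity. Qed.

Lemma bilDl n (M : 'M[R]_n) x y z : bil M (x + y) z = bil M x z + bil M y z.
Proof. by rewrite /bil linearD /= !mulmxDl mxE. Qed.
Lemma bilDr n (M : 'M[R]_n) x y z : bil M z (x + y) = bil M z x + bil M z y.
Proof. by rewrite /bil !mulmxDr mxE. Qed.
Lemma bilZl n (M : 'M[R]_n) a x z : bil M (a *: x) z = a * bil M x z.
Proof. by rewrite /bil linearZ /= -!scalemxAl mxE. Qed.
Lemma bilZr n (M : 'M[R]_n) a x z : bil M z (a *: x) = a * bil M z x.
Proof. by rewrite /bil -!scalemxAr mxE. Qed.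
Lemma bilNl n (M : 'M[R]_n) x z : bil M (- x) z = - bil M x z.
Proof. by rewrite -scaleN1r bilZl mulN1r. Qed.
Lemma bilNr n (M : 'M[R]_n) x z : bil M z (- x) = - bil M z x.
Proof. by rewrite -scaleN1r bilZr mulN1r. Qed.
Lemma bilMD n (M N : 'M[R]_n) x z : bil (M + N) x z = bil M x z + bil N x z.
Proof. by rewrite /bil mulmxDr mulmxDl mxE. Qed.
Lemma bil1 n (x z : 'cV[R]_n) : bil 1%:M x z = ip x z.
Proof. by rewrite /bil mulmx1. Qed.

Definition psd n (M : 'M[R]_n) := forall x, 0 <= qf M x.
Definition PDm n (mu : R) (M : 'M[R]_n) := forall x, mu * ip x x <= qf M x.

Lemma PD_unit n mu (M : 'M[R]_n) : 0 < mu -> PDm mu M -> M \in unitmx.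
Proof.
move=> mu0 HM; rewrite unitmxE unitfE; apply/negP => /det0P [v vn0 vM].
have := HM v^T; rewrite /qf /bil trmxK vM mul0mx mxE => H.
have : ip v^T v^T = 0.
  by apply/eqP; rewrite eq_le ip_ge0 andbT -(pmulr_rle0 _ mu0).
by move/ip_eq0 => /(congr1 trmx); rewrite trmxK trmx0 => v0; rewrite v0 eqxx in vn0.
Qed.

Lemma qf_inv n (M : 'M[R]_n) z : M^T = M -> M \in unitmx ->
  qf (invmx M) z = qf M (invmx M *m z).
Proof.
move=> sM uM; rewrite /qf /bil trmx_mul trmx_inv sM.
by rewrite -!mulmxA (mulmxA M) mulmxV // mul1mx.
Qed.

Lemma bil_inv n (M : 'M[R]_n) y z : M \in unitmx ->
  bil M y (invmx M *m z) = ip y z.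
Proof. by move=> uM; rewrite /bil mulmxA -(mulmxA _ M) mulmxV // mulmx1. Qed.

Lemma CS n (M : 'M[R]_n) y z : M^T = M -> M \in unitmx -> psd M ->
  ip y z ^+ 2 <= qf M y * qf (invmx M) z.
Proof.
move=> sM uM pM; set w := invmx M *m z.
have key t : 0 <= t ^+ 2 * qf M y - 2 * t * ip y z + qf (invmx M) z.
  have := pM (t *: y - w); rewrite /qf !(bilDl, bilDr, bilNl, bilNr, bilZl, bilZr).
  have e1 : bil M w y = ip y z by rewrite bilC // bil_inv.
  have e2 : bil M w w = bil (invmx M) z z.
    by rewrite {1}/w bil_inv // ipC /ip /bil mulmxA.
  rewrite e1 e2 => H; apply: le_trans H _; rewrite le_eqVlt; apply/orP; left; apply/eqP.
  rewrite (bilC y) //; rewrite e1 /qf; ring.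
set p := qf M y; set r := ip y z; set c := qf (invmx M) z.
have c0 : 0 <= c by rewrite /c qf_inv //; apply: pM.
have p0 : 0 <= p by apply: pM.
case: (ltrP 0 p) => [pp|pn].
  have := key (r / p).
  have -> : (r / p) ^+ 2 * p - 2 * (r / p) * r + c = c - r ^+ 2 / p.
    by field; rewrite gt_eqF.
  by rewrite subr_ge0 ler_pdivrMr // mulrC.
have p00 : p = 0 by apply/eqP; rewrite eq_le pn p0.
case: (eqVneq r 0) => [->|rn0]; first by rewrite expr0n /= mulr_ge0.
have H := key ((c + 1) / (2 * r)).
have E : 2 * ((c + 1) / (2 * r)) * r = c + 1 by field.
move: H; rewrite /p in p00; rewrite p00 mulr0 sub0r E -/c; lra.
Qed.

End LA.


Section LA2.
Variable R : realType.

Lemma psd_add n (M N : 'M[R]_n) : psd M -> psd N -> psd (M + N).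
Proof. by move=> pM pN x; rewrite /qf bilMD; apply: addr_ge0; [exact: pM|exact: pN]. Qed.

Lemma loewner n (M1 N : 'M[R]_n) z : M1^T = M1 -> N^T = N ->
  M1 \in unitmx -> (M1 + N) \in unitmx -> psd M1 -> psd N ->
  qf (invmx (M1 + N)) z <= qf (invmx M1) z.
Proof.
move=> s1 sN u1 u2 p1 pN.
have s2 : (M1 + N)^T = M1 + N by rewrite linearD /= s1 sN.
set y := invmx (M1 + N) *m z.
have e : qf (invmx (M1 + N)) z = ip y z by rewrite qf_inv // /qf bil_inv.
have e2 : qf (M1 + N) y = ip y z by rewrite /qf bil_inv.
have h1 : qf M1 y <= ip y z by rewrite -e2 /qf bilMD lerDl; apply: pN.
have r0 : 0 <= ip y z by rewrite -e2; apply: psd_add.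
have c0 : 0 <= qf (invmx M1) z by rewrite qf_inv //; apply: p1.
have := CS y z s1 u1 p1.
rewrite e; set r := ip y z; set c := qf (invmx M1) z => hcs.
have : r ^+ 2 <= r * c by apply: le_trans hcs _; rewrite ler_wpM2r.
case: (ltrP 0 r) => [rp|rn]; first by rewrite expr2 ler_pM2l.
by move=> _; apply: le_trans rn c0.
Qed.

Lemma bil_sum n I (r : seq I) (P : pred I) (F : I -> 'M[R]_n) x y :
  bil (\sum_(i <- r | P i) F i) x y = \sum_(i <- r | P i) bil (F i) x y.
Proof.
by rewrite /bil mulmx_sumr mulmx_suml summxE.
Qed.

Lemma qf_outer n (x y : 'cV[R]_n) : qf (x *m x^T) y = ip y x ^+ 2.
Proof.
rewrite /qf /bil mulmxA [y^T *m x]mx11_scalar mul_scalar_mx -scalemxAl mxE.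
by rewrite expr2 -/(ip y x) ipC.
Qed.

Lemma qf_scalar n (a : R) (x : 'cV[R]_n) : qf a%:M x = a * ip x x.
Proof. by rewrite /qf /bil mul_mx_scalar -scalemxAl mxE. Qed.

Lemma psd_outer n (x : 'cV[R]_n) : psd (x *m x^T).
Proof. by move=> y; rewrite qf_outer sqr_ge0. Qed.

Lemma psd_sum n I (r : seq I) (P : pred I) (F : I -> 'M[R]_n) :
  (forall i, P i -> psd (F i)) -> psd (\sum_(i <- r | P i) F i).
Proof. by move=> H y; rewrite /qf bil_sum; apply: sumr_ge0 => i Pi; apply: H. Qed.

Lemma sym_outer n (x : 'cV[R]_n) : (x *m x^T)^T = x *m x^T.
Proof. by rewrite trmx_mul trmxK. Qed.

Lemma sym_sum n I (r : seq I) (P : pred I) (F : I -> 'M[R]_n) :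
  (forall i, P i -> (F i)^T = F i) -> (\sum_(i <- r | P i) F i)^T = \sum_(i <- r | P i) F i.
Proof.
move=> H; rewrite linear_sum /=.
by apply: eq_bigr.
Qed.

Lemma diag_ge n mu (M : 'M[R]_n) i : PDm mu M -> mu <= M i i.
Proof.
move=> pM; have := pM (delta_mx i 0).
rewrite /qf /bil /ip trmx_delta mul_delta_mx mxE !eqxx mulr1.
by rewrite -rowE -colE !mxE.
Qed.

Lemma det_rank1 n (u v : 'cV[R]_n) : \det (1%:M + u *m v^T) = 1 + (v^T *m u) 0 0.
Proof.
pose X := block_mx (1%:M : 'M_n) (- u) v^T (1%:M : 'M_1).
have e1 : X = block_mx (1%:M + u *m v^T) (- u) 0 1%:M *m block_mx 1%:M 0 v^T 1%:M.
  rewrite mulmx_block !mulmx1 !mul0mx !mulmx0 !mul1mx !add0r ?addr0.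
  by rewrite mulNmx addrK.
have e2 : X = block_mx 1%:M 0 v^T 1%:M *m block_mx 1%:M (- u) 0 (1%:M + v^T *m u).
  rewrite mulmx_block !mulmx1 !mul0mx !mulmx0 !mul1mx ?add0r ?addr0.
  by rewrite mulmxN addrC addrK.
have := e1; rewrite e2 => /(congr1 determinant).
rewrite !det_mulmx (det_lblock (1%:M : 'M[R]_n)) (det_ublock (1%:M : 'M[R]_n)).
rewrite (det_ublock (1%:M + u *m v^T)).
rewrite !(@det1 _ n) !(@det1 _ 1) !mulr1 !mul1r => <-.
by rewrite det_mx11 !mxE /=.
Qed.

Lemma det_add_outer n (M : 'M[R]_n) x : M \in unitmx ->
  \det (M + x *m x^T) = \det M * (1 + qf (invmx M) x).
Proof.
move=> uM.
have -> : M + x *m x^T = M *m (1%:M + (invmx M *m x) *m x^T).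
  by rewrite mulmxDr mulmx1 !mulmxA mulmxV // mul1mx.
by rewrite det_mulmx det_rank1 /qf /bil mulmxA.
Qed.

End LA2.


Section Had.
Variable R : realType.

Lemma hadamard_step n
  (IH : forall mu (M : 'M[R]_n), 0 < mu -> M^T = M -> PDm mu M -> \det M <= \prod_i M i i)
  mu (M : 'M[R]_(1 + n)) : 0 < mu -> M^T = M -> PDm mu M ->
  \det M <= \prod_i M i i.
Proof.
move=> mu0 sM pM.
set a := ulsubmx M; set b := ursubmx M; set c := dlsubmx M; set D := drsubmx M.
have eM : M = block_mx a b c D by rewrite submxK.
have [sa [scb [sbc sD]]] : a^T = a /\ c^T = b /\ b^T = c /\ D^T = D.
  move: sM; rewrite eM tr_block_mx => /eq_block_mx [-> -> -> ->]; by [].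
set al := a 0 0.
have al_pos : 0 < al.
  have := diag_ge (lshift n 0) pM; rewrite /al /a !mxE.
  exact: lt_le_trans mu0.
have ea : a = al%:M by rewrite {1}[a]mx11_scalar.
set D' := D - al^-1 *: (c *m b).
have fact : M = block_mx 1%:M 0 (al^-1 *: c) 1%:M *m block_mx a b 0 D'.
  rewrite mulmx_block !mul1mx !mul0mx ?addr0 ?mulmx0 ?add0r.
  rewrite -!scalemxAl [in c *m a]ea mul_mx_scalar scalerA mulVf ?gt_eqF // scale1r.
  by rewrite /D' addrC subrK -eM.
have detM : \det M = al * \det D'.
  rewrite {1}fact det_mulmx det_lblock det_ublock !(@det1 _ 1) !(@det1 _ n) !mul1r.
  by rewrite det_mx11.
have sD' : D'^T = D'.
  by rewrite /D' linearB /= linearZ /= trmx_mul sD scb sbc.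
have pD' : PDm mu D'.
  move=> y; set t := - (al^-1 *: (b *m y)).
  pose w := col_mx t y.
  have Mw : M *m w = col_mx 0 (D' *m y).
    rewrite eM mul_block_col ea mul_scalar_mx /t scalerN scalerA mulfV ?gt_eqF //.
    rewrite scale1r addNr; congr col_mx.
    by rewrite /D' mulmxN -scalemxAr mulmxBl -scalemxAl mulmxA addrC.
  have e1 : qf M w = qf D' y.
    by rewrite /qf /bil -mulmxA Mw tr_col_mx mul_row_col mulmx0 add0r mulmxA.
  have e2 : ip w w = ip t t + ip y y.
    by rewrite /ip tr_col_mx mul_row_col mxE.
  rewrite -e1; apply: le_trans (pM w); rewrite e2; apply: ler_wpM2l; first exact: ltW.
  by rewrite lerDr ip_ge0.
have := IH mu D' mu0 sD' pD' => hD.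
rewrite big_split_ord big_ord1 /=.
have -> : M (lshift n 0) (lshift n 0) = al by rewrite /al /a !mxE.
rewrite detM ler_pM2l //; apply: le_trans hD _.
apply: ler_prod => i _.
have h0 := diag_ge i pD'; apply/andP; split; first exact: le_trans (ltW mu0) h0.
have -> : M (rshift 1 i) (rshift 1 i) = D i i by rewrite /D !mxE.
rewrite /D' !mxE big_ord1.
have -> : c i 0 = b 0 i by rewrite -sbc mxE.
rewrite lerBlDr lerDl; apply: mulr_ge0; [by rewrite invr_ge0 ltW | by rewrite -expr2 sqr_ge0].
Qed.

Lemma hadamard n mu (M : 'M[R]_n) : 0 < mu -> M^T = M -> PDm mu M ->
  \det M <= \prod_i M i i.
Proof.
elim: n mu M => [|n IH] mu M mu0 sM pM; first by rewrite det_mx00 big_ord0.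
exact: (hadamard_step IH mu0 sM pM).
Qed.

Lemma det_le_tr n mu (M : 'M[R]_n) : (0 < n)%N -> 0 < mu -> M^T = M -> PDm mu M ->
  \det M <= (\tr M / n%:R) ^+ n.
Proof.
move=> n0 mu0 sM pM; apply: le_trans (hadamard mu0 sM pM) _.
have := leif_AGM (A := predT) (E := fun i => M i i) => /=.
rewrite cardT size_enum_ord => H.
have := (H (fun i _ => ltW (lt_le_trans mu0 (diag_ge i pM)))).1.
by rewrite /mxtrace.
Qed.

End Had.


Section NumS.
Variable R : realType.

Lemma ln_le_mono (x y : R) : 0 < x -> x <= y -> ln x <= ln y.
Proof.
move=> x0 xy; rewrite ler_ln // posrE //; exact: lt_le_trans xy.
Qed.

Lemma ln_frac (y : R) : 0 <= y -> y / (1 + y) <= ln (1 + y).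
Proof.
move=> y0; have p : 0 < 1 + y by lra.
have := @le_ln1Dx R ((1 + y)^-1 - 1).
have -> : 1 + ((1 + y)^-1 - 1) = (1 + y)^-1 by ring.
rewrite lnV ?posrE // => H.
have : -1 < (1 + y)^-1 - 1 by rewrite ltrBrDr addNr invr_gt0.
move/H; have -> : (1 + y)^-1 - 1 = - (y / (1 + y)) by field; lra.
by rewrite lerN2.
Qed.

Lemma expR1_le3 : expR (1 : R) <= 3.
Proof.
have h := @expR_ge1Dx R (- (6%:R^-1)).
have e6 : expR (6%:R^-1 : R) <= 6 / 5.
  have p : 0 < expR (- (6%:R^-1 : R)) := expR_gt0 _.
  rewrite -[X in expR X]opprK expRN -[X in X <= _]mul1r ler_pdivrMr //; lra.
have -> : (1 : R) = 6%:R * 6%:R^-1 by rewrite mulfV // pnatr_eq0.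
rewrite expRM_natl; apply: (@le_trans _ _ ((6 / 5) ^+ 6)).
  by apply: lerXn2r; rewrite ?nnegrE ?expR_ge0 //; lra.
have -> : (6 / 5 : R) ^+ 6 = ((6 / 5) ^+ 3) ^+ 2 by rewrite -exprM.
have t3 : (6 / 5 : R) ^+ 3 <= 173 / 100 by rewrite !exprS expr0; lra.
have t0 : 0 <= (6 / 5 : R) ^+ 3 by rewrite exprn_ge0 //; lra.
apply: (@le_trans _ _ ((173 / 100) ^+ 2)); first by apply: lerXn2r; rewrite ?nnegrE //; lra.
rewrite expr2; lra.
Qed.

Lemma ln_ge_nat (n : nat) (x : R) : 3 ^+ n <= x -> n%:R <= ln x.
Proof.
move=> hx; have e : expR (n%:R : R) <= x.
  rewrite -[n%:R]mulr1 expRM_natl; apply: le_trans hx.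
  by apply: lerXn2r; rewrite ?nnegrE ?expR_ge0 ?expR1_le3 //.
by rewrite -[n%:R]expRK; apply: ln_le_mono => //; apply: expR_gt0.
Qed.

Lemma ln_ge_half (x : R) : 2 <= x -> 1 / 2 <= ln x.
Proof.
move=> hx; have e : expR (1 / 2 : R) <= 2.
  have h2 : expR (1 / 2 : R) ^+ 2 <= 2 ^+ 2.
    rewrite -expRM_natl; have -> : (2%:R * (1 / 2) : R) = 1 by field.
    apply: le_trans (expR1_le3) _; rewrite expr2; lra.
  by move: h2; rewrite ler_pXn2r // ?nnegrE ?expR_ge0 //; lra.
by rewrite -[1 / 2]expRK; apply: ln_le_mono; [apply: expR_gt0|apply: le_trans hx].
Qed.

Lemma min_bound (x b H : R) : 0 <= x -> 0 < H -> H <= b ->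
  (Num.min (3 * b * x) H) ^+ 2 <= 10 * b ^+ 2 * ln (1 + x ^+ 2).
Proof.
move=> x0 H0 Hb; have b0 : 0 < b by apply: lt_le_trans Hb.
have y0 : 0 <= x ^+ 2 by apply: sqr_ge0.
case: (leP (3 * b * x) H) => h.
  have x3 : x <= 1 / 3.
    rewrite ler_pdivlMr //; have : 3 * b * x <= b by apply: le_trans Hb.
    by rewrite -[X in _ <= X]mulr1 -mulrA mulrCA ler_pM2l // mulrC; lra.
  have y9 : x ^+ 2 <= 1 / 9.
    have -> : (1 / 9 : R) = (1 / 3) ^+ 2 by rewrite expr2; field.
    by apply: lerXn2r; rewrite ?nnegrE //; lra.
  have hl := ln_frac y0.
  have : 9 * x ^+ 2 <= 10 * (x ^+ 2 / (1 + x ^+ 2)).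
    rewrite mulrA ler_pdivlMr; last by lra.
    set y := x ^+ 2 in y0 y9 *; nra.
  move=> h9; have h10 : 9 * x ^+ 2 <= 10 * ln (1 + x ^+ 2) by lra.
  have -> : (3 * b * x) ^+ 2 = b ^+ 2 * (9 * x ^+ 2) by ring.
  have -> : 10 * b ^+ 2 * ln (1 + x ^+ 2) = b ^+ 2 * (10 * ln (1 + x ^+ 2)) by ring.
  by apply: ler_wpM2l => //; apply: sqr_ge0.
set c := H ^+ 2 / (9 * b ^+ 2).
have b2 : 0 < b ^+ 2 by apply: exprn_gt0.
have c0 : 0 < c by rewrite /c divr_gt0 ?mulr_gt0 ?exprn_gt0.
have c9 : c <= 1 / 9.
  rewrite /c ler_pdivrMr ?mulr_gt0 //.
  have : H ^+ 2 <= b ^+ 2 by apply: lerXn2r; rewrite ?nnegrE //; lra.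
  lra.
have cx : c <= x ^+ 2.
  rewrite /c ler_pdivrMr ?mulr_gt0 //.
  have : H ^+ 2 <= (3 * b * x) ^+ 2 by apply: lerXn2r; rewrite ?nnegrE ?ltW //; nra.
  by rewrite !exprMn; lra.
have h1 : ln (1 + c) <= ln (1 + x ^+ 2) by apply: ln_le_mono; lra.
have h2 := ln_frac (ltW c0).
have h3 : 9 * c <= 10 * (c / (1 + c)).
  rewrite mulrA ler_pdivlMr; last by lra.
  nra.
have eH : H ^+ 2 = b ^+ 2 * (9 * c) by rewrite /c; field; rewrite gt_eqF.
have -> : 10 * b ^+ 2 * ln (1 + x ^+ 2) = b ^+ 2 * (10 * ln (1 + x ^+ 2)) by ring.
rewrite eH; apply: ler_wpM2l; [exact: ltW | lra].
Qed.

Lemma sum_CS (I : Type) (r : seq I) (f : I -> R) :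
  (\sum_(i <- r) f i) ^+ 2 <= (size r)%:R * \sum_(i <- r) f i ^+ 2.
Proof.
elim: r => [|i r IH]; first by rewrite !big_nil expr0n mulr0.
rewrite !big_cons /= -natr1.
set S := \sum_(j <- r) f j; set Q := \sum_(j <- r) f j ^+ 2; set n := (size r)%:R.
have n0 : 0 <= n by rewrite /n ler0n.
have Q0 : 0 <= Q by rewrite /Q sumr_ge0 // => j _; apply: sqr_ge0.
set a := f i.
have := sqr_ge0 (n * a - S).
move: IH; rewrite -/S -/Q -/n => IH H.
case: (ltrP 0 n) => np.
  rewrite -(@ler_pM2l _ n) //; nra.
have n00 : n = 0 by apply/eqP; rewrite eq_le np n0.
rewrite n00 mul0r in IH; have S0 : S = 0.
  by apply/eqP; rewrite -sqrf_eq0 eq_le IH sqr_ge0.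
by rewrite S0 n00 addr0 add0r mul1r lerDl.
Qed.

End NumS.


Section Num2.
Variable R : realType.

Lemma sqrt_le_const (x c : R) : 0 <= c -> x <= c ^+ 2 -> Num.sqrt x <= c.
Proof.
move=> c0 h; rewrite -(ger0_norm c0) -sqrtr_sqr ler_sqrt //; exact: sqr_ge0.
Qed.

Lemma chain (a2 q2 Kr : R) : 1 <= Kr -> ln (4 * Kr) <= a2 -> ln (1 + Kr) <= q2 ->
  (6 <= a2 /\ 4 <= q2) \/ Kr <= 36 * a2 * q2.
Proof.
move=> K1 ha hq; case: (leP Kr (36 * a2 * q2)) => hK; [by right | left].
have a1 : 1 <= a2.
  apply: le_trans ha; have := @ln_ge_nat R 1 (4 * Kr); rewrite expr1; apply; lra.
have q1 : 1 / 2 <= q2 by apply: le_trans hq; apply: ln_ge_half; lra.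
have K18 : 18 < Kr by nra.
have a3 : 3 <= a2.
  apply: le_trans ha; have := @ln_ge_nat R 3 (4 * Kr).
  have -> : (3 : R) ^+ 3 = 27 by rewrite !exprS expr0; lra.
  by apply; lra.
have q2' : 2 <= q2.
  apply: le_trans hq; have := @ln_ge_nat R 2 (1 + Kr).
  have -> : (3 : R) ^+ 2 = 9 by rewrite !exprS expr0; lra.
  by apply; lra.
have K216 : 216 < Kr by nra.
split.
  apply: le_trans ha; have := @ln_ge_nat R 6 (4 * Kr).
  have -> : (3 : R) ^+ 6 = 729 by rewrite !exprS expr0; lra.
  by apply; lra.
apply: le_trans hq; have := @ln_ge_nat R 4 (1 + Kr).
have -> : (3 : R) ^+ 4 = 81 by rewrite !exprS expr0; lra.
by apply; lra.
Qed.

Lemma final_num (V Hr Kr a q : R) : 1 <= Hr -> 1 <= Kr -> 0 <= a -> 0 <= q ->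
  V <= Hr ->
  Kr * V <= Hr * (a + 1) * Num.sqrt (10 * Kr) * q + Num.sqrt 2 * Hr * a * Num.sqrt Kr ->
  (6 <= a ^+ 2 /\ 4 <= q ^+ 2) \/ Kr <= 36 * a ^+ 2 * q ^+ 2 ->
  V <= 6 * Hr * a * q / Num.sqrt Kr.
Proof.
move=> H1 K1 a0 q0 VH hV hc.
set s := Num.sqrt Kr.
have s0 : 0 < s by rewrite /s sqrtr_gt0; lra.
have eK : Kr = s ^+ 2 by rewrite /s sqr_sqrtr //; lra.
rewrite ler_pdivlMr //.
case: hc => [[ha hq]|hK].
  have a244 : 244 / 100 <= a by nra.
  have q2 : 2 <= q by nra.
  have s10 : Num.sqrt (10 : R) <= 317 / 100 by apply: (@sqrt_le_const 10 (317/100)); rewrite ?expr2; lra.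
  have s2 : Num.sqrt (2 : R) <= 142 / 100 by apply: (@sqrt_le_const 2 (142/100)); rewrite ?expr2; lra.
  have s100 : 0 <= Num.sqrt (10 : R) := sqrtr_ge0 _.
  have s20 : 0 <= Num.sqrt (2 : R) := sqrtr_ge0 _.
  have X : (a + 1) * Num.sqrt 10 * q + Num.sqrt 2 * a <= 6 * a * q.
    have e1 : (a + 1) * Num.sqrt 10 * q <= (a + 1) * (317 / 100) * q.
      have : Num.sqrt 10 * q <= 317 / 100 * q by nra.
      nra.
    have e2 : Num.sqrt 2 * a <= 142 / 100 * a by nra.
    nra.
  rewrite sqrtrM ?ler0n // -/s eK in hV.
  have : s * (s * V) <= s * (Hr * ((a + 1) * Num.sqrt 10 * q + Num.sqrt 2 * a)).
    have -> : s * (s * V) = s ^+ 2 * V by ring.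
    have -> : s * (Hr * ((a + 1) * Num.sqrt 10 * q + Num.sqrt 2 * a)) =
      Hr * (a + 1) * (Num.sqrt 10 * s) * q + Num.sqrt 2 * Hr * a * s by ring.
    exact: hV.
  rewrite ler_pM2l // => h; rewrite mulrC; apply: le_trans h _.
  have -> : 6 * Hr * a * q = Hr * (6 * a * q) by ring.
  by rewrite ler_wpM2l //; lra.
have hs : s <= 6 * a * q.
  apply: sqrt_le_const; first by rewrite !mulr_ge0 //; lra.
  by rewrite !exprMn; have -> : (6 : R) ^+ 2 = 36 by rewrite expr2; lra.
rewrite mulrC; apply: le_trans (_ : s * Hr <= _).
  by rewrite ler_wpM2l // ltW.
have -> : 6 * Hr * a * q = Hr * (6 * a * q) by ring.
by rewrite mulrC ler_wpM2l //; lra.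
Qed.

End Num2.


Section Gen.
Variables (R : realType) (S A : finType).

Lemma max_ge_l (x y : R) : x <= Num.max x y.
Proof. by case: (leP x y). Qed.
Lemma max_ge_r (x y : R) : y <= Num.max x y.
Proof. by case: (leP x y) => // /ltW. Qed.
Lemma max_le (x y c : R) : x <= c -> y <= c -> Num.max x y <= c.
Proof. by case: (leP x y). Qed.
Lemma min_le_l (x y : R) : Num.min x y <= x.
Proof. by case: (leP x y) => // /ltW. Qed.
Lemma min_le_r (x y : R) : Num.min x y <= y.
Proof. by case: (leP x y). Qed.
Lemma min_ge (x y c : R) : c <= x -> c <= y -> c <= Num.min x y.
Proof. by case: (leP x y). Qed.
Lemma min_mono (x y x' y' : R) : x <= x' -> y <= y' -> Num.min x y <= Num.min x' y'.
Proof.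
move=> h1 h2; apply: min_ge.
  by apply: le_trans (min_le_l _ _) h1.
by apply: le_trans (min_le_r _ _) h2.
Qed.

Lemma bigmax_seq_ge (x0 : R) (f : A -> R) (r : seq A) a : a \in r ->
  f a <= \big[Num.max/x0]_(i <- r) f i.
Proof.
elim: r => [//|b r IH]; rewrite inE big_cons => /orP [/eqP ->|ar].
  exact: max_ge_l.
by apply: le_trans (IH ar) _; apply: max_ge_r.
Qed.

Lemma maxA_ge (a0 : A) (f : A -> R) a : f a <= Defs.maxA a0 f.
Proof. by rewrite /Defs.maxA; apply: bigmax_seq_ge; rewrite mem_index_enum. Qed.

Lemma maxA_le (a0 : A) (f : A -> R) (c : R) : (forall a, f a <= c) -> Defs.maxA a0 f <= c.
Proof.
move=> h; rewrite /Defs.maxA; apply: (big_ind (fun x => x <= c)) => //.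
by move=> x y hx hy; case: (leP x y).
Qed.

Lemma maxA_mono (a0 : A) (f g : A -> R) : (forall a, f a <= g a) -> Defs.maxA a0 f <= Defs.maxA a0 g.
Proof. by move=> h; apply: maxA_le => a; apply: le_trans (h a) (maxA_ge _ _ _). Qed.

Lemma maxA_arg (a0 : A) (f : A -> R) a : (forall b, f b <= f a) -> Defs.maxA a0 f = f a.
Proof. by move=> h; apply/eqP; rewrite eq_le maxA_le // maxA_ge. Qed.

Lemma bwdV_step (H : nat) (step : nat -> (S -> R) -> (S -> R)) h :
  (1 <= h <= H)%N -> bwdV H step h = step h (bwdV H step h.+1).
Proof.
move=> /andP [h1 hH]; rewrite /bwdV h1 hH /=.
have -> : (H.+1 - h = (H - h).+1)%N by rewrite subSn.
rewrite /= (_ : (H - (H - h) = h)%N); last by rewrite subKn.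
case: ifP => hh; first by rewrite subSS.
have -> : h = H by apply/eqP; rewrite eqn_leq hH leqNgt hh.
by rewrite subnn.
Qed.

Lemma bwdV_end (H : nat) (step : nat -> (S -> R) -> (S -> R)) s :
  bwdV H step H.+1 s = 0.
Proof. by rewrite /bwdV ltnn andbF. Qed.

Lemma down_ind (H : nat) (Q : nat -> Prop) : Q H.+1 ->
  (forall h, (1 <= h <= H)%N -> Q h.+1 -> Q h) -> forall h, (1 <= h <= H.+1)%N -> Q h.
Proof.
move=> hE hS; suff: forall m h, (1 <= h <= H.+1)%N -> (H.+1 - h = m)%N -> Q h.
  by move=> H' h hh; exact: (H' _ h hh erefl).
elim=> [|m IH] h /andP [h1 hH] e.
  have -> : h = H.+1 by apply/eqP; rewrite eqn_leq hH /= -subn_eq0 e.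
  exact: hE.
have hlt : (h < H.+1)%N by rewrite -subn_gt0 e.
apply: hS; first by rewrite h1.
apply: IH; first by rewrite hlt.
by rewrite subnS e.
Qed.

Lemma Vstar_step (a0 : A) (H : nat) (P : nat -> S -> A -> S -> R) Rw h s :
  (1 <= h <= H)%N -> Vstar a0 H P Rw h s =
  Defs.maxA a0 (fun a => Num.min (Rw h s a + \sum_(s' : S) P h s a s' * Vstar a0 H P Rw h.+1 s') H%:R).
Proof. by move=> hh; rewrite /Vstar bwdV_step. Qed.

Lemma Vstar_end (a0 : A) (H : nat) (P : nat -> S -> A -> S -> R) Rw s :
  Vstar a0 H P Rw H.+1 s = 0.
Proof. exact: bwdV_end. Qed.

Lemma Vstar_bounds (a0 : A) (H : nat) (P : nat -> S -> A -> S -> R) Rw :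
  (forall h s a, (1 <= h <= H)%N -> (forall s', 0 <= P h s a s')) ->
  (forall h s a, (1 <= h <= H)%N -> 0 <= Rw h s a) ->
  forall h, (1 <= h <= H.+1)%N -> forall s, 0 <= Vstar a0 H P Rw h s <= H%:R.
Proof.
move=> hP hR; apply: down_ind; first by move=> s; rewrite Vstar_end lexx ler0n.
move=> h hh IH s; rewrite Vstar_step //; apply/andP; split.
  apply: le_trans (maxA_ge _ _ a0); apply: min_ge; last exact: ler0n.
  apply: addr_ge0; first exact: hR.
  by apply: sumr_ge0 => s' _; apply: mulr_ge0; [exact: hP | case/andP: (IH s')].
by apply: maxA_le => a; apply: min_le_r.
Qed.

Lemma Vstar_mono (a0 : A) (H : nat) (P : nat -> S -> A -> S -> R) R1 R2 :
  (forall h s a, (1 <= h <= H)%N -> (forall s', 0 <= P h s a s')) ->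
  (forall h s a, (1 <= h <= H)%N -> R1 h s a <= R2 h s a) ->
  forall h, (1 <= h <= H.+1)%N -> forall s, Vstar a0 H P R1 h s <= Vstar a0 H P R2 h s.
Proof.
move=> hP hR; apply: down_ind; first by move=> s; rewrite !Vstar_end.
move=> h hh IH s; rewrite !Vstar_step //; apply: maxA_mono => a.
apply: min_mono => //; apply: lerD; first exact: hR.
by apply: ler_sum => s' _; apply: ler_wpM2l; [exact: hP | exact: IH].
Qed.

End Gen.


Lemma CS_abs (R : realType) n (M : 'M[R]_n) y z : M^T = M -> M \in unitmx -> psd M ->
  `|ip y z| <= Num.sqrt (qf M y) * Num.sqrt (qf (invmx M) z).
Proof.
move=> sM uM pM; have h := CS y z sM uM pM.
rewrite -sqrtrM ?pM // -sqrtr_sqr ler_sqrt //.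
by apply: mulr_ge0; [apply: pM | rewrite qf_inv //; apply: pM].
Qed.

Section Main.
Variables (R : realType) (S A : finType) (a0 : A) (d H K : nat) (B delta : R)
  (phi : S -> A -> S -> 'cV[R]_d) (theta : nat -> 'cV[R]_d)
  (P : nat -> S -> A -> S -> R) (s1 : S)
  (Vt : nat -> nat -> S -> A -> S -> R) (pi : nat -> nat -> S -> A)
  (st : nat -> nat -> S) (act : nat -> nat -> A).
Hypotheses (Hd : (0 < d)%N) (HH : (0 < H)%N) (HK : (0 < K)%N) (HB : 0 < B)
  (Hdel : 0 < delta < 1).
Hypothesis HP : forall h s a, (1 <= h <= H)%N ->
     (forall s', 0 <= P h s a s') /\ \sum_(s' : S) P h s a s' = 1.
Hypothesis Hphi : forall s a (V : S -> R), (forall s', 0 <= V s' <= 1) ->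
     wnorm 1%:M (phiV phi s a V) <= 1.
Hypothesis Htheta : forall h, (1 <= h <= H)%N -> wnorm 1%:M (theta h) <= B.
Hypothesis HPt : forall h s a s', (1 <= h <= H)%N ->
  P h s a s' = ((theta h)^T *m phi s a s') ord0 ord0.
Hypothesis HVt : forall k h s a, (1 <= k <= K)%N -> (1 <= h <= H)%N ->
     (forall s', 0 <= Vt k h s a s' <= H%:R) /\
     (forall V : S -> R, (forall s', 0 <= V s' <= H%:R) ->
        wnorm (invmx (Lam phi B Vt st act k h)) (phiV phi s a V)
        <= wnorm (invmx (Lam phi B Vt st act k h)) (featV phi Vt k h s a)).
Hypothesis Hpi : forall k h s a, (1 <= k <= K)%N -> (1 <= h <= H)%N ->
     Qk phi B delta H K Vt st act a0 k h s a
     <= Qk phi B delta H K Vt st act a0 k h s (pi k h s).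
Hypothesis Htraj : forall k, (1 <= k <= K)%N ->
     st k 1%N = s1 /\
     forall h, (1 <= h <= H)%N ->
       act k h = pi k h (st k h) /\ 0 < P h (st k h) (act k h) (st k h.+1).
Hypothesis HE1 : forall k h, (1 <= k <= K)%N -> (1 <= h <= H)%N ->
     wnorm (Lam phi B Vt st act k h) (thetahat phi B Vt st act k h - theta h)
     <= betaB d H K B delta.
Hypothesis HE2 :
  \sum_(1 <= k < K.+1) \sum_(1 <= h < H.+1)
     (\sum_(s' : S) P h (st k h) (act k h) s' * Valg phi B delta H K Vt st act a0 k h.+1 s'
      - Valg phi B delta H K Vt st act a0 k h.+1 (st k h.+1))
   <= Num.sqrt (2 * H%:R ^+ 3 * K%:R * ln (4 / delta)).

Local Notation Lk := (Lam phi B Vt st act).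
Local Notation beta := (betaB d H K B delta).
Local Notation Va := (Valg phi B delta H K Vt st act a0).
Local Notation bon := (bonus phi B delta H K Vt st act).
Local Notation Vs k := (Vstar a0 H P (bon k)).
Local Notation ft k h := (featV phi Vt k h (st k h) (act k h)).
Local Notation lam := (lamB B).

Lemma lam_pos : 0 < lam.
Proof. by rewrite /lamB invr_gt0 exprn_gt0. Qed.

Lemma sqrt_lam : Num.sqrt lam * B = 1.
Proof.
rewrite /lamB -exprVn sqrtr_sqr ger0_norm ?invr_ge0 ?ltW //.
by rewrite mulVf // gt_eqF.
Qed.

Lemma Lk_sym k h : (Lk k h)^T = Lk k h.
Proof.
rewrite /Lam linearD /= tr_scalar_mx sym_sum // => t _; exact: sym_outer.
Qed.

Lemma Lk_PD k h : PDm lam (Lk k h).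
Proof.
move=> x; rewrite /Lam /qf bilMD.
have -> : bil (lam%:M) x x = lam * ip x x by exact: qf_scalar.
rewrite lerDr.
by apply: psd_sum => t _; apply: psd_outer.
Qed.

Lemma Lk_unit k h : Lk k h \in unitmx.
Proof. exact: PD_unit lam_pos (Lk_PD k h). Qed.

Lemma Lk_psd k h : psd (Lk k h).
Proof.
move=> x; apply: le_trans (Lk_PD k h x); apply: mulr_ge0; [exact: ltW lam_pos | exact: ip_ge0].
Qed.

Lemma qf_inv_ge0 k h z : 0 <= qf (invmx (Lk k h)) z.
Proof. by rewrite qf_inv ?Lk_sym ?Lk_unit //; apply: Lk_psd. Qed.

Lemma wnorm_qf n (M : 'M[R]_n) x : wnorm M x = Num.sqrt (qf M x).
Proof. by []. Qed.

Lemma wnorm1 n (x : 'cV[R]_n) : wnorm 1%:M x = Num.sqrt (ip x x).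
Proof. by rewrite wnorm_qf /qf bil1. Qed.

Lemma phiV_scale s a c (V : S -> R) :
  phiV phi s a (fun s' => c * V s') = c *: phiV phi s a V.
Proof. by rewrite /phiV scaler_sumr; apply: eq_bigr => s' _; rewrite scalerA. Qed.

Lemma sqrt_le1 (x : R) : 0 <= x -> Num.sqrt x <= 1 -> x <= 1.
Proof.
move=> x0 h; rewrite -(sqr_sqrtr x0); have s0 := sqrtr_ge0 x.
by rewrite expr2; nra.
Qed.

Lemma Hpos : (0 < H%:R :> R).
Proof. by rewrite ltr0n. Qed.

Lemma featV_norm k h s a : (1 <= k <= K)%N -> (1 <= h <= H)%N ->
  ip (featV phi Vt k h s a) (featV phi Vt k h s a) <= H%:R ^+ 2.
Proof.
move=> hk hh; have [hV _] := HVt s a hk hh.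
set V := Vt k h s a.
have eV : featV phi Vt k h s a = H%:R *: phiV phi s a (fun s' => V s' / H%:R).
  rewrite -phiV_scale /featV /phiV; apply: eq_bigr => s' _.
  by rewrite mulrC divfK // gt_eqF // Hpos.
have h1 : ip (phiV phi s a (fun s' => V s' / H%:R)) (phiV phi s a (fun s' => V s' / H%:R)) <= 1.
  apply: sqrt_le1; first exact: ip_ge0.
  rewrite -wnorm1; apply: Hphi => s'; have /andP [v0 vH] := hV s'.
  by rewrite divr_ge0 ?ler0n //= ler_pdivrMr ?Hpos // mul1r.
rewrite eV -!bil1 bilZl bilZr bil1 mulrA -expr2.
by rewrite -[X in _ <= X]mulr1 ler_wpM2l // sqr_ge0.
Qed.

Lemma PV_eq h s a (V : S -> R) : (1 <= h <= H)%N ->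
  \sum_(s' : S) P h s a s' * V s' = ((theta h)^T *m phiV phi s a V) ord0 ord0.
Proof.
move=> hh; rewrite /phiV mulmx_sumr summxE; apply: eq_bigr => s' _.
by rewrite -scalemxAr mxE HPt // mulrC.
Qed.

Lemma psd1 n : psd (1%:M : 'M[R]_n).
Proof. by move=> x; rewrite /qf bil1 ip_ge0. Qed.

Lemma CS_euclid n (y z : 'cV[R]_n) : `|ip y z| <= wnorm 1%:M y * wnorm 1%:M z.
Proof.
have := CS_abs y z (tr_scalar_mx _ _) (unitmx1 _ _) (@psd1 n).
by rewrite invmx1 -!wnorm_qf.
Qed.

Lemma B_ge1 : 1 <= B.
Proof.
have h1 : (1 <= 1 <= H)%N by rewrite leqnn HH.
have [_ hs] := HP s1 a0 h1.
have : \sum_(s' : S) P 1 s1 a0 s' * (fun _ => 1) s' = 1.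
  by rewrite -[in RHS]hs; apply: eq_bigr => s' _; rewrite mulr1.
rewrite PV_eq // -/(ip (theta 1) _) => e.
have := CS_euclid (theta 1) (phiV phi s1 a0 (fun _ => 1)); rewrite e ger0_norm //.
move=> h; apply: le_trans h _.
have h2 : wnorm 1%:M (phiV phi s1 a0 (fun _ => 1)) <= 1 by apply: Hphi => s'; rewrite ler01 lexx.
have h3 := Htheta h1.
have w0 : 0 <= wnorm 1%:M (theta 1) := sqrtr_ge0 _.
have w1 : 0 <= wnorm 1%:M (phiV phi s1 a0 (fun _ => 1)) := sqrtr_ge0 _.
nra.
Qed.

Lemma beta_ge0 : 0 <= beta.
Proof.
rewrite /betaB; apply: addr_ge0; first by apply: mulr_ge0; [exact: ler0n | exact: sqrtr_ge0].
by apply: mulr_ge0; [exact: sqrtr_ge0 | exact: ltW].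
Qed.

Lemma bon_ge0 k h s a : 0 <= bon k h s a.
Proof. by rewrite /bonus; apply: mulr_ge0; [exact: beta_ge0 | exact: sqrtr_ge0]. Qed.

Lemma sub11 (X Y : 'M[R]_1) : (X - Y) ord0 ord0 = X ord0 ord0 - Y ord0 ord0.
Proof. by rewrite !mxE. Qed.

Lemma diff_bound k h s a (V : S -> R) : (1 <= k <= K)%N -> (1 <= h <= H)%N ->
  (forall s', 0 <= V s' <= H%:R) ->
  `|((thetahat phi B Vt st act k h)^T *m phiV phi s a V) ord0 ord0
    - ((theta h)^T *m phiV phi s a V) ord0 ord0| <= bon k h s a.
Proof.
move=> hk hh hV.
rewrite -sub11 -mulmxBl -linearB /= -/(ip _ _).
apply: le_trans (CS_abs _ _ (Lk_sym k h) (Lk_unit k h) (Lk_psd k h)) _.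
rewrite -!wnorm_qf /bonus; apply: ler_pM; try exact: sqrtr_ge0.
  exact: HE1.
by have [_ hm] := HVt s a hk hh; apply: hm.
Qed.

Lemma abs_le2 (x y b : R) : `|x - y| <= b -> y <= x + b /\ x <= y + b.
Proof. by rewrite ler_norml => /andP [h1 h2]; split; lra. Qed.

Lemma Va_step k h s : (1 <= h <= H)%N ->
  Va k h s = Defs.maxA a0 (Qalg phi B delta H K Vt st act k h (Va k h.+1) s).
Proof. by move=> hh; rewrite /Valg bwdV_step. Qed.

Lemma Va_end k s : Va k H.+1 s = 0.
Proof. exact: bwdV_end. Qed.

Lemma P_ge0 h s a s' : (1 <= h <= H)%N -> 0 <= P h s a s'.
Proof. by move=> hh; have [hp _] := HP s a hh; apply: hp. Qed.

Lemma Vs_bounds k : forall h, (1 <= h <= H.+1)%N -> forall s, 0 <= Vs k h s <= H%:R.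
Proof.
apply: Vstar_bounds.
  by move=> h s a hh s'; apply: P_ge0.
by move=> h s a _; apply: bon_ge0.
Qed.

Lemma opt k : (1 <= k <= K)%N -> forall h, (1 <= h <= H.+1)%N -> forall s,
  Vs k h s <= Va k h s /\ 0 <= Va k h s <= H%:R.
Proof.
move=> hk; apply: down_ind.
  by move=> s; rewrite Vstar_end Va_end lexx ler0n.
move=> h hh IH s.
have hh1 : (1 <= h.+1 <= H.+1)%N by apply/andP; split => //; rewrite ltnS; case/andP: hh.
have hh1' : (1 <= h <= H.+1)%N by case/andP: hh => -> h2; rewrite (leq_trans h2).
have VaB : forall s', 0 <= Va k h.+1 s' <= H%:R by move=> s'; case: (IH s').
have le1 : Vs k h s <= Va k h s.
  rewrite Vstar_step // Va_step //; apply: maxA_mono => a.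
  rewrite /Qalg; apply: min_mono => //.
  have [hd _] := abs_le2 (diff_bound s a hk hh VaB).
  rewrite -PV_eq // in hd.
  have : \sum_(s' : S) P h s a s' * Vs k h.+1 s' <= \sum_(s' : S) P h s a s' * Va k h.+1 s'.
    by apply: ler_sum => s' _; apply: ler_wpM2l; [apply: P_ge0 | case: (IH s')].
  lra.
split => //; apply/andP; split.
  by apply: le_trans le1; case/andP: (Vs_bounds k hh1' s).
by rewrite Va_step //; apply: maxA_le => a; apply: min_le_r.
Qed.

Lemma Lk_split k k' h : (1 <= k <= k')%N ->
  Lk k' h = Lk k h + \sum_(k <= t < k') (ft t h *m (ft t h)^T).
Proof.
move=> /andP [h1 h2]; rewrite /Lam (big_cat_nat h1 h2) /=.
by rewrite addrAC.
Qed.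

Lemma bon_mono k h s a : (1 <= k <= K)%N -> (1 <= h <= H)%N ->
  bon K h s a <= bon k h s a.
Proof.
move=> hk hh; rewrite /bonus; apply: ler_wpM2l; first exact: beta_ge0.
have hK : (1 <= K <= K)%N by rewrite HK leqnn.
apply: le_trans (_ : wnorm (invmx (Lk k h)) (featV phi Vt K h s a) <= _).
  rewrite !wnorm_qf ler_sqrt; last exact: qf_inv_ge0.
  rewrite (Lk_split h hk); apply: loewner.
  - exact: Lk_sym.
  - by apply: sym_sum => t _; apply: sym_outer.
  - exact: Lk_unit.
  - by rewrite -Lk_split //; apply: Lk_unit.
  - exact: Lk_psd.
  - by apply: psd_sum => t _; apply: psd_outer.
have [hV _] := HVt s a hK hh.
by have [_ hm] := HVt s a hk hh; apply: hm.
Qed.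

Lemma Vs_mono k : (1 <= k <= K)%N -> Vs K 1 s1 <= Vs k 1 s1.
Proof.
move=> hk; apply: Vstar_mono.
- by move=> h s a hh s'; apply: P_ge0.
- by move=> h s a hh; apply: bon_mono.
- by rewrite leqnn ltnS.
Qed.

Lemma step_bound k h : (1 <= k <= K)%N -> (1 <= h <= H)%N ->
  Va k h (st k h) - \sum_(s' : S) P h (st k h) (act k h) s' * Va k h.+1 s'
  <= Num.min (3 * bon k h (st k h) (act k h)) H%:R.
Proof.
move=> hk hh.
have hh1 : (1 <= h.+1 <= H.+1)%N by apply/andP; split => //; rewrite ltnS; case/andP: hh.
have VaB : forall s', 0 <= Va k h.+1 s' <= H%:R by move=> s'; case: (opt hk hh1 s').
have [_ htr] := Htraj hk; have [ea _] := htr h hh.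
have e : Va k h (st k h) = Qk phi B delta H K Vt st act a0 k h (st k h) (act k h).
  rewrite Va_step // ea; apply: maxA_arg => b.
  by have := Hpi (st k h) b hk hh.
rewrite e /Qk /Qalg.
set s := st k h; set a := act k h.
have [_ hd] := abs_le2 (diff_bound s a hk hh VaB).
rewrite -PV_eq // in hd.
set PV := \sum_(s' : S) P h s a s' * Va k h.+1 s' in hd *.
have PV0 : 0 <= PV.
  by apply: sumr_ge0 => s' _; apply: mulr_ge0; [apply: P_ge0 | case/andP: (VaB s')].
set X := ((thetahat phi B Vt st act k h)^T *m phiV phi s a (Va k h.+1)) ord0 ord0 in hd *.
set b := bon k h s a in hd *.
apply: min_ge.
  by apply: le_trans (_ : X + b + b - PV <= _); [apply: lerB => //; apply: min_le_l | lra].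
by apply: le_trans (_ : H%:R - PV <= _); [apply: lerB => //; apply: min_le_r | lra].
Qed.

Lemma telesc k : (1 <= k <= K)%N ->
  Va k 1 s1 = \sum_(1 <= h < H.+1) (Va k h (st k h) - Va k h.+1 (st k h.+1)).
Proof.
move=> hk; have [e1 _] := Htraj hk.
have := @telescope_sumr _ 1 H.+1 (fun h => - Va k h (st k h)) (ltn0Sn H).
rewrite /= Va_end e1 oppr0 add0r opprK => <-.
by apply: eq_bigr => h _; rewrite opprK addrC.
Qed.

Local Notation xx k h := (wnorm (invmx (Lk k h)) (ft k h)).

Lemma Lk_succ k h : (1 <= k)%N -> Lk k.+1 h = Lk k h + ft k h *m (ft k h)^T.
Proof. by move=> hk; rewrite /Lam big_nat_recr //= addrAC. Qed.

Lemma xx_sq k h : xx k h ^+ 2 = qf (invmx (Lk k h)) (ft k h).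
Proof. by rewrite wnorm_qf sqr_sqrtr // qf_inv_ge0. Qed.

Lemma det_prod h n : (1 <= n)%N ->
  \det (Lk n h) = \det (Lk 1 h) * \prod_(1 <= k < n) (1 + xx k h ^+ 2).
Proof.
elim: n => [//|n IH] hn.
case: (posnP n) => [->|n0]; first by rewrite big_geq // mulr1.
rewrite big_nat_recr //= mulrA -IH // Lk_succ // det_add_outer ?Lk_unit //.
by rewrite xx_sq.
Qed.

Lemma det_Lk1 h : \det (Lk 1 h) = lam ^+ d.
Proof. by rewrite /Lam big_geq // add0r det_scalar. Qed.

Lemma tr_outer n (x : 'cV[R]_n) : \tr (x *m x^T) = ip x x.
Proof. by rewrite mxtrace_mulC /mxtrace big_ord1. Qed.

Lemma tr_LkK h : (1 <= h <= H)%N ->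
  \tr (Lk K.+1 h) <= K%:R * H%:R ^+ 2 + lam * d%:R.
Proof.
move=> hh; rewrite /Lam mxtraceD mxtrace_scalar raddf_sum /= -[lam *+ d]mulr_natr lerD2r.
have -> : K%:R * H%:R ^+ 2 = \sum_(1 <= k < K.+1) (H%:R ^+ 2 : R).
  by rewrite sumr_const_nat subn1 /= mulr_natl.
rewrite big_nat [X in _ <= X]big_nat; apply: ler_sum => k /andP [k1 kK].
rewrite tr_outer; apply: featV_norm => //.
by rewrite k1 -ltnS.
Qed.

Lemma ln_prod (r : seq nat) (F : nat -> R) : (forall i, 0 < F i) ->
  ln (\prod_(i <- r) F i) = \sum_(i <- r) ln (F i).
Proof.
move=> hF; elim: r => [|i r IH]; first by rewrite !big_nil ln1.
rewrite !big_cons lnM ?IH // posrE //; exact: prodr_gt0.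
Qed.

Definition Lp : R := ln (1 + K%:R * H%:R ^+ 2 * B ^+ 2 / d%:R).

Lemma ellip h : (1 <= h <= H)%N ->
  \sum_(1 <= k < K.+1) ln (1 + xx k h ^+ 2) <= d%:R * Lp.
Proof.
move=> hh.
have pos : forall k, 0 < 1 + xx k h ^+ 2.
  by move=> k; have := sqr_ge0 (xx k h); lra.
have d0 : (0 < d%:R :> R) by rewrite ltr0n.
have l0 := lam_pos.
set y := K%:R * H%:R ^+ 2 * B ^+ 2 / d%:R.
have y0 : 0 <= y.
  rewrite /y; apply: divr_ge0; last exact: ler0n.
  apply: mulr_ge0; last exact: sqr_ge0.
  by apply: mulr_ge0; [exact: ler0n | exact: sqr_ge0].
rewrite -ln_prod // /Lp -/y mulr_natl -lnXn; last by lra.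
apply: ln_le_mono; first exact: prodr_gt0.
have h1 := det_prod h (ltn0Sn K).
rewrite det_Lk1 in h1.
have h2 := det_le_tr Hd l0 (Lk_sym K.+1 h) (Lk_PD K.+1 h).
have h3 : \tr (Lk K.+1 h) / d%:R <= (1 + y) * lam.
  rewrite ler_pdivrMr // /y.
  apply: le_trans (tr_LkK hh) _.
  have e : (1 + K%:R * H%:R ^+ 2 * B ^+ 2 / d%:R) * lam * d%:R = K%:R * H%:R ^+ 2 + lam * d%:R.
    rewrite /lamB; field; rewrite ?gt_eqF // ?exprn_gt0 //.
  by rewrite e.
have tr0 : 0 <= \tr (Lk K.+1 h) / d%:R.
  apply: divr_ge0; last exact: ler0n.
  rewrite /mxtrace; apply: sumr_ge0 => i _.
  exact: le_trans (ltW l0) (diag_ge i (Lk_PD K.+1 h)).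
have h4 : (\tr (Lk K.+1 h) / d%:R) ^+ d <= ((1 + y) * lam) ^+ d.
  apply: lerXn2r; rewrite ?nnegrE //.
  by apply: mulr_ge0; [lra | exact: ltW].
rewrite h1 in h2.
have := le_trans h2 h4; rewrite exprMn [X in _ <= X -> _]mulrC ler_pM2l //.
exact: exprn_gt0.
Qed.

Definition Larg : R := 4 * H%:R ^+ 3 * K%:R * lam^-1 * delta^-1.
Definition Lm : R := ln Larg.

Lemma Larg_ge4 : 4 <= Larg.
Proof.
have B1 := B_ge1.
have h1 : 1 <= H%:R ^+ 3 :> R by apply: exprn_ege1; rewrite ler1n.
have h2 : 1 <= K%:R :> R by rewrite ler1n.
have h3 : 1 <= lam^-1 by rewrite /lamB invrK; apply: exprn_ege1.
have h4 : 1 <= delta^-1.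
  case/andP: Hdel => d0 d1; rewrite invf_ge1 //; exact: ltW.
have P1 : 1 <= H%:R ^+ 3 * K%:R * lam^-1 * delta^-1.
  apply: mulr_ege1 => //; apply: mulr_ege1 => //; exact: mulr_ege1.
have -> : Larg = 4 * (H%:R ^+ 3 * K%:R * lam^-1 * delta^-1) by rewrite /Larg !mulrA.
lra.
Qed.

Lemma Lm_ge1 : 1 <= Lm.
Proof.
have := @ln_ge_nat R 1 Larg; rewrite expr1 /Lm; apply.
by apply: le_trans Larg_ge4; lra.
Qed.

Lemma beta_eq : beta = H%:R * Num.sqrt (d%:R * Lm) + 1.
Proof. by rewrite /betaB sqrt_lam. Qed.

Lemma H_le_beta : H%:R <= beta.
Proof.
have d1 : 1 <= d%:R :> R by rewrite ler1n.
have L1 := Lm_ge1.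
rewrite beta_eq; have h : 1 <= Num.sqrt (d%:R * Lm).
  have dl : 1 <= d%:R * Lm by apply: mulr_ege1.
  rewrite -[X in X <= _]sqrtr1 ler_sqrt //; exact: le_trans ler01 dl.
have := Hpos; nra.
Qed.

Lemma Lp_ge0 : 0 <= Lp.
Proof.
rewrite /Lp; apply: ln_ge0; rewrite lerDl; apply: divr_ge0; last exact: ler0n.
apply: mulr_ge0; last exact: sqr_ge0.
by apply: mulr_ge0; [exact: ler0n | exact: sqr_ge0].
Qed.

Lemma le_sqrt_of_sq (x c : R) : 0 <= x -> x ^+ 2 <= c -> x <= Num.sqrt c.
Proof.
move=> x0 h; rewrite -(ger0_norm x0) -sqrtr_sqr ler_sqrt //.
by apply: le_trans h; exact: sqr_ge0.
Qed.

Lemma sum_h h : (1 <= h <= H)%N ->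
  \sum_(1 <= k < K.+1) Num.min (3 * bon k h (st k h) (act k h)) H%:R
  <= beta * Num.sqrt (10 * K%:R) * Num.sqrt (d%:R * Lp).
Proof.
move=> hh.
have hb := H_le_beta.
have b0 := beta_ge0.
have m2 : forall k, (Num.min (3 * bon k h (st k h) (act k h)) H%:R) ^+ 2
    <= 10 * beta ^+ 2 * ln (1 + xx k h ^+ 2).
  move=> k; rewrite /bonus mulrA; apply: min_bound => //; first exact: sqrtr_ge0.
  exact: Hpos.
have m0 : forall k, 0 <= Num.min (3 * bon k h (st k h) (act k h)) H%:R.
  move=> k; apply: min_ge; last exact: ler0n.
  by apply: mulr_ge0; [lra | exact: bon_ge0].
have hcs := sum_CS (index_iota 1 K.+1) (fun k => Num.min (3 * bon k h (st k h) (act k h)) H%:R).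
rewrite size_iota subn1 /= in hcs.
have hl := ellip hh.
have h2 : \sum_(1 <= k < K.+1) (Num.min (3 * bon k h (st k h) (act k h)) H%:R) ^+ 2
    <= 10 * beta ^+ 2 * (d%:R * Lp).
  apply: le_trans (_ : \sum_(1 <= k < K.+1) 10 * beta ^+ 2 * ln (1 + xx k h ^+ 2) <= _).
    by apply: ler_sum => k _; apply: m2.
  by rewrite -mulr_sumr; apply: ler_wpM2l => //; apply: mulr_ge0; [lra | exact: sqr_ge0].
have hK0 : (0 <= K%:R :> R) by exact: ler0n.
have h3 : (\sum_(1 <= k < K.+1) Num.min (3 * bon k h (st k h) (act k h)) H%:R) ^+ 2
    <= beta ^+ 2 * (10 * K%:R) * (d%:R * Lp).
  apply: le_trans hcs _.
  have -> : beta ^+ 2 * (10 * K%:R) * (d%:R * Lp) = K%:R * (10 * beta ^+ 2 * (d%:R * Lp)) by ring.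
  by apply: ler_wpM2l.
have s0 : 0 <= \sum_(1 <= k < K.+1) Num.min (3 * bon k h (st k h) (act k h)) H%:R.
  by apply: sumr_ge0 => k _; apply: m0.
apply: le_trans (le_sqrt_of_sq s0 h3) _.
have t0 : 0 <= 10 * K%:R :> R by apply: mulr_ge0; [lra | exact: ler0n].
have e : Num.sqrt (beta ^+ 2 * (10 * K%:R) * (d%:R * Lp)) =
    Num.sqrt (beta ^+ 2) * Num.sqrt (10 * K%:R) * Num.sqrt (d%:R * Lp).
  have p1 : 0 <= beta ^+ 2 * (10 * K%:R) by apply: mulr_ge0; [exact: sqr_ge0 | exact: t0].
  rewrite (@sqrtrM _ (beta ^+ 2 * (10 * K%:R)) (d%:R * Lp) p1).
  by rewrite (@sqrtrM _ (beta ^+ 2) (10 * K%:R) (sqr_ge0 _)).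
by rewrite e sqrtr_sqr ger0_norm.
Qed.

Lemma Vs_le_Va k : (1 <= k <= K)%N -> Vs k 1 s1 <= Va k 1 s1.
Proof. by move=> hk; case: (opt hk (isT : (1 <= 1 <= H.+1)%N) s1). Qed.

Lemma KV : K%:R * Vs K 1 s1 <=
  H%:R * (beta * Num.sqrt (10 * K%:R) * Num.sqrt (d%:R * Lp))
  + Num.sqrt (2 * H%:R ^+ 3 * K%:R * ln (4 / delta)).
Proof.
have e1 : K%:R * Vs K 1 s1 = \sum_(1 <= k < K.+1) Vs K 1 s1.
  by rewrite sumr_const_nat subn1 /= mulr_natl.
rewrite e1.
set Q := fun k h => Num.min (3 * bon k h (st k h) (act k h)) H%:R.
set D := fun k h => \sum_(s' : S) P h (st k h) (act k h) s' * Va k h.+1 s' - Va k h.+1 (st k h.+1).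
have step1 : \sum_(1 <= k < K.+1) Vs K 1 s1 <= \sum_(1 <= k < K.+1) \sum_(1 <= h < H.+1) (Q k h + D k h).
  rewrite big_nat [X in _ <= X]big_nat; apply: ler_sum => k /andP [k1 kK].
  have hk : (1 <= k <= K)%N by rewrite k1 -ltnS.
  apply: le_trans (Vs_mono hk) _; apply: le_trans (Vs_le_Va hk) _.
  rewrite telesc // big_nat [X in _ <= X]big_nat; apply: ler_sum => h /andP [h1 hH].
  have hh : (1 <= h <= H)%N by rewrite h1 -ltnS.
  have := step_bound hk hh; rewrite /Q /D; lra.
apply: le_trans step1 _.
under eq_bigr do rewrite big_split /=.
rewrite big_split /= addrC [X in _ <= X]addrC lerD //.
rewrite exchange_big_nat /=.
have -> : H%:R * (beta * Num.sqrt (10 * K%:R) * Num.sqrt (d%:R * Lp)) =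
  \sum_(1 <= h < H.+1) (beta * Num.sqrt (10 * K%:R) * Num.sqrt (d%:R * Lp)).
  by rewrite sumr_const_nat subn1 /= mulr_natl.
rewrite big_nat [X in _ <= X]big_nat; apply: ler_sum => h /andP [h1 hH].
by apply: sum_h; rewrite h1 -ltnS.
Qed.

Lemma bernoulli (y : R) n : 0 <= y -> 1 + n%:R * y <= (1 + y) ^+ n.
Proof.
move=> y0; elim: n => [|n IH]; first by rewrite mul0r addr0 expr0.
rewrite exprS -natr1.
have p : 0 <= n%:R :> R by exact: ler0n.
have e : 0 <= n%:R * y by apply: mulr_ge0.
have := ler_wpM2l (_ : 0 <= 1 + y) IH.
move=> /(_ ltac:(lra)) h; apply: le_trans h.
have : 0 <= n%:R * y * y by apply: mulr_ge0.
nra.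
Qed.

Lemma Lm_ge0 : 0 <= Lm.
Proof. by have := Lm_ge1; lra. Qed.

Lemma main_sec :
  Vstar a0 H P (bonus phi B delta H K Vt st act K) 1%N s1
  <= 6 * H%:R ^+ 2 * d%:R *
     Num.sqrt (ln (4 * H%:R ^+ 3 * K%:R * B ^+ 2 / delta)
               * ln (1 + K%:R * H%:R ^+ 2 * B ^+ 2 / d%:R) / K%:R).
Proof.
have eL : ln (4 * H%:R ^+ 3 * K%:R * B ^+ 2 / delta) = Lm by rewrite /Lm /Larg /lamB invrK.
rewrite eL -/Lp.
move Ea: (H%:R * Num.sqrt (d%:R * Lm)) => a.
move Eq: (Num.sqrt (d%:R * Lp)) => q.
have H1 : 1 <= H%:R :> R by rewrite ler1n.
have K1 : 1 <= K%:R :> R by rewrite ler1n.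
have d1 : 1 <= d%:R :> R by rewrite ler1n.
have d0 : 0 <= d%:R :> R by exact: ler0n.
have L0 := Lm_ge0.
have Lp0 := Lp_ge0.
have a0' : 0 <= a by rewrite -Ea; apply: mulr_ge0; [exact: ler0n | exact: sqrtr_ge0].
have q0 : 0 <= q by rewrite -Eq; exact: sqrtr_ge0.
have a2 : a ^+ 2 = H%:R ^+ 2 * (d%:R * Lm).
  by rewrite -Ea exprMn sqr_sqrtr //; apply: mulr_ge0.
have q2 : q ^+ 2 = d%:R * Lp by rewrite -Eq sqr_sqrtr //; apply: mulr_ge0.
have hKV := KV.
rewrite beta_eq Ea Eq in hKV.
have VH : Vs K 1 s1 <= H%:R by case/andP: (Vs_bounds K (isT : (1 <= 1 <= H.+1)%N) s1).
have hM : Num.sqrt (2 * H%:R ^+ 3 * K%:R * ln (4 / delta))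
    <= Num.sqrt 2 * H%:R * a * Num.sqrt K%:R.
  apply: sqrt_le_const.
    apply: mulr_ge0; last exact: sqrtr_ge0.
    by apply: mulr_ge0; [apply: mulr_ge0; [exact: sqrtr_ge0 | exact: ler0n] | exact: a0'].
  rewrite !exprMn a2 sqr_sqrtr ?ler0n // sqr_sqrtr; last by lra.
  have hl : ln (4 / delta) <= Lm.
    case/andP: Hdel => dl0 dl1.
    apply: ln_le_mono; first by apply: divr_gt0; lra.
    have P1 : 1 <= H%:R ^+ 3 * K%:R * lam^-1.
      apply: mulr_ege1; first by apply: mulr_ege1 => //; exact: exprn_ege1.
      rewrite /lamB invrK; apply: exprn_ege1; exact: B_ge1.
    have -> : Larg = (4 / delta) * (H%:R ^+ 3 * K%:R * lam^-1) by rewrite /Larg; ring.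
    rewrite -[X in X <= _]mulr1 ler_pM2l //; apply: divr_gt0; lra.
  have hl2 : ln (4 / delta) <= H%:R * (d%:R * Lm).
    apply: le_trans hl _; have : 1 <= H%:R * d%:R :> R by apply: mulr_ege1.
    nra.
  have H3 : 0 <= H%:R ^+ 3 * K%:R :> R by apply: mulr_ge0; [apply: exprn_ge0; lra | lra].
  have := ler_wpM2l H3 hl2.
  have -> : 2 * H%:R ^+ 3 * K%:R * ln (4 / delta) = 2 * (H%:R ^+ 3 * K%:R * ln (4 / delta)) by ring.
  have -> : 2 * H%:R ^+ 2 * (H%:R ^+ 2 * (d%:R * Lm)) * K%:R =
    2 * (H%:R ^+ 3 * K%:R * (H%:R * (d%:R * Lm))) by ring.
  lra.
have hKV2 : K%:R * Vs K 1 s1 <= H%:R * (a + 1) * Num.sqrt (10 * K%:R) * q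
    + Num.sqrt 2 * H%:R * a * Num.sqrt K%:R.
  apply: le_trans hKV _; apply: lerD; last exact: hM.
  by rewrite !mulrA.
have ha : ln (4 * K%:R) <= a ^+ 2.
  rewrite a2; apply: le_trans (_ : Lm <= _).
    apply: ln_le_mono; first lra.
    have P1 : 1 <= H%:R ^+ 3 * lam^-1 * delta^-1.
      apply: mulr_ege1; first apply: mulr_ege1; first exact: exprn_ege1.
        rewrite /lamB invrK; apply: exprn_ege1; exact: B_ge1.
      case/andP: Hdel => dl0 dl1; rewrite invf_ge1 //; exact: ltW.
    have -> : Larg = (4 * K%:R) * (H%:R ^+ 3 * lam^-1 * delta^-1) by rewrite /Larg; ring.
    rewrite -[X in X <= _]mulr1 ler_pM2l //; lra.
  have : 1 <= H%:R ^+ 2 * d%:R :> R by apply: mulr_ege1 => //; exact: exprn_ege1.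
  have -> : H%:R ^+ 2 * (d%:R * Lm) = (H%:R ^+ 2 * d%:R) * Lm by ring.
  nra.
have hq : ln (1 + K%:R) <= q ^+ 2.
  rewrite q2 /Lp mulr_natl -lnXn; last first.
    apply: (lt_le_trans ltr01); rewrite lerDl; apply: divr_ge0; last exact: ler0n.
    by apply: mulr_ge0; [apply: mulr_ge0; [lra | exact: sqr_ge0] | exact: sqr_ge0].
  apply: ln_le_mono; first lra.
  set y := K%:R * H%:R ^+ 2 * B ^+ 2 / d%:R.
  have y0 : 0 <= y.
    by apply: divr_ge0; [apply: mulr_ge0; [apply: mulr_ge0; [lra | exact: sqr_ge0] | exact: sqr_ge0] | lra].
  apply: le_trans (bernoulli d y0).
  have -> : d%:R * y = K%:R * (H%:R ^+ 2 * B ^+ 2) by rewrite /y; field; rewrite gt_eqF //; lra.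
  have : 1 <= H%:R ^+ 2 * B ^+ 2 by apply: mulr_ege1; apply: exprn_ege1 => //; exact: B_ge1.
  nra.
have hch := chain K1 ha hq.
have := final_num H1 K1 a0' q0 VH hKV2 hch.
move=> h; apply: le_trans h _; rewrite le_eqVlt; apply/orP; left; apply/eqP.
rewrite (@sqrtrM _ (Lm * Lp) K%:R^-1); last by apply: mulr_ge0.
rewrite sqrtrV; last lra.
rewrite (@sqrtrM _ Lm Lp) //.
rewrite -Ea -Eq (@sqrtrM _ d%:R Lm) // (@sqrtrM _ d%:R Lp) //.
have sd : Num.sqrt d%:R ^+ 2 = d%:R :> R by rewrite sqr_sqrtr.
rewrite -[in RHS]sd; ring.
Qed.

End Main.

Unset Implicit Arguments.

Theorem lemma9 (R : realType) (S A : finType) (a0 : A) (d H K : nat) (B delta : R)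
  (phi : S -> A -> S -> 'cV[R]_d) (theta : nat -> 'cV[R]_d)
  (P : nat -> S -> A -> S -> R) (s1 : S)
  (Vt : nat -> nat -> S -> A -> S -> R) (pi : nat -> nat -> S -> A)
  (st : nat -> nat -> S) (act : nat -> nat -> A) :
  (0 < d)%N -> (0 < H)%N -> (0 < K)%N -> 0 < B -> 0 < delta < 1 ->
  (* transition kernel *)
  (forall h s a, (1 <= h <= H)%N ->
     (forall s', 0 <= P h s a s') /\ \sum_(s' : S) P h s a s' = 1) ->
  (* linear mixture structure *)
  (forall s a (V : S -> R), (forall s', 0 <= V s' <= 1) ->
     wnorm 1%:M (phiV phi s a V) <= 1) ->
  (forall h, (1 <= h <= H)%N -> wnorm 1%:M (theta h) <= B) ->
  (forall h s a s', (1 <= h <= H)%N -> P h s a s' = ((theta h)^T *m phi s a s') ord0 ord0) ->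
  (* Algorithm 1: choice of tilde V_{k,h+1,s,a} as a maximizer over V : S -> [0,H] *)
  (forall k h s a, (1 <= k <= K)%N -> (1 <= h <= H)%N ->
     (forall s', 0 <= Vt k h s a s' <= H%:R) /\
     (forall V : S -> R, (forall s', 0 <= V s' <= H%:R) ->
        wnorm (invmx (Lam phi B Vt st act k h)) (phiV phi s a V)
        <= wnorm (invmx (Lam phi B Vt st act k h)) (featV phi Vt k h s a))) ->
  (* Algorithm 1: greedy policy pi_{k,h}(s) in argmax_a Q_{k,h}(s,a) *)
  (forall k h s a, (1 <= k <= K)%N -> (1 <= h <= H)%N ->
     Qk phi B delta H K Vt st act a0 k h s a
     <= Qk phi B delta H K Vt st act a0 k h s (pi k h s)) ->
  (* trajectories: executed from s1 with pi_k, next states drawn from P_h *)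
  (forall k, (1 <= k <= K)%N ->
     st k 1%N = s1 /\
     forall h, (1 <= h <= H)%N ->
       act k h = pi k h (st k h) /\ 0 < P h (st k h) (act k h) (st k h.+1)) ->
  (* event E1 (i) *)
  (forall k h, (1 <= k <= K)%N -> (1 <= h <= H)%N ->
     wnorm (Lam phi B Vt st act k h) (thetahat phi B Vt st act k h - theta h)
     <= betaB d H K B delta) ->
  (* event E1 (ii) *)
  \sum_(1 <= k < K.+1) \sum_(1 <= h < H.+1)
     (\sum_(s' : S) P h (st k h) (act k h) s' * Valg phi B delta H K Vt st act a0 k h.+1 s'
      - Valg phi B delta H K Vt st act a0 k h.+1 (st k h.+1))
   <= Num.sqrt (2 * H%:R ^+ 3 * K%:R * ln (4 / delta)) ->
  Vstar a0 H P (bonus phi B delta H K Vt st act K) 1%N s1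
  <= 6 * H%:R ^+ 2 * d%:R *
     Num.sqrt (ln (4 * H%:R ^+ 3 * K%:R * B ^+ 2 / delta)
               * ln (1 + K%:R * H%:R ^+ 2 * B ^+ 2 / d%:R) / K%:R).
Proof.
intros; eapply main_sec; eassumption.
Qed.
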